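(* For every oriented virtual knot diagram $K$, $\gamma(K)=a+(2k)t$ for some integers $a$ and $k$; that is, the coefficient of $t$ in $\gamma(K)$ is even.
   Context: For an oriented virtual knot diagram $K$ and a classical crossing $c$ with sign $sgn(c)\in\{\pm1\}$, let $K_c$ be the two-component oriented virtual link diagram obtained by smoothing $c$ in the orientation-respecting way. Let $L(K_c)$ be the sum of the signs of all classical crossings of $K_c$ at which the two strands belong to different components, and $\bar L(K_c)=L(K_c)\bmod 2\in\{0,1\}$. Define $\gamma(K)=\sum_{c} t^{\bar L(K_c)}\,sgn(c)$, summing over all classical crossings, an element of the free $\mathbb{Z}$-module on $\{1,t\}$. *)

(* Defs.v *)
From mathcomp Require Import all_boot all_order all_algebra.
Unset Printing Implicit Defensive.
Import GRing.Theory Num.Theory.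
Local Open Scope ring_scope.

(* An oriented virtual knot diagram is encoded by its Gauss diagram
   (virtual crossings are invisible).  [gword] lists, in the order met when
   travelling along the knot from a base point, the passages through the
   classical crossings: (c, true) = over-passage at crossing c,
   (c, false) = under-passage at crossing c.  [gsign c] is the sign of c
   (true = +1, false = -1). *)
Record gauss_diagram := GaussDiagram {
  gn : nat;
  gword : seq ('I_gn * bool);
  gsign : 'I_gn -> bool
}.

Definition gauss_wf (K : gauss_diagram) : Prop :=
  forall c : 'I_(gn K),
    count (pred1 (c, true)) (gword K) = 1%N /\
    count (pred1 (c, false)) (gword K) = 1%N.

Definition sgn (K : gauss_diagram) (c : 'I_(gn K)) : int :=
  if gsign K c then 1 else -1.

Definition pos_over (K : gauss_diagram) (c : 'I_(gn K)) : nat :=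
  index (c, true) (gword K).
Definition pos_under (K : gauss_diagram) (c : 'I_(gn K)) : nat :=
  index (c, false) (gword K).

(* Orientation-respecting smoothing at c: the knot is cut at the two passages
   through c, giving two components: the arc strictly between the two
   passages (component [true]) and the complementary arc (component [false]).
   [smooth_comp K c p] is the component of K_c containing the passage at
   position p (p different from the two positions of c). *)
Definition smooth_comp (K : gauss_diagram) (c : 'I_(gn K)) (p : nat) : bool :=
  let lo := minn (pos_over K c) (pos_under K c) in
  let hi := maxn (pos_over K c) (pos_under K c) in
  (lo < p < hi)%N.

Definition mixed_crossing (K : gauss_diagram) (c d : 'I_(gn K)) : bool :=
  (d != c) &&
  (smooth_comp K c (pos_over K d) != smooth_comp K c (pos_under K d)).

Definition Lsmooth (K : gauss_diagram) (c : 'I_(gn K)) : int :=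
  \sum_(d : 'I_(gn K) | mixed_crossing K c d) sgn K d.

Definition Lbar (K : gauss_diagram) (c : 'I_(gn K)) : nat :=
  odd `|Lsmooth K c|%N.

(* gamma(K) = \sum_c t^{\bar L(K_c)} sgn(c), as an integer polynomial in t
   (its values lie in the free Z-module on {1, t}) *)
Definition gamma (K : gauss_diagram) : {poly int} :=
  \sum_(c : 'I_(gn K)) (sgn K c)%:P * 'X ^+ Lbar K c.

(* Main.v *)
Require Import Defs.
From mathcomp Require Import all_boot all_order all_algebra.
From mathcomp Require Import zify.
Import GRing.Theory Num.Theory.
Local Open Scope ring_scope.

Lemma interl (a b p q : nat) : a != b -> a != p -> a != q -> b != p -> b != q -> p != q ->
  ((minn a b < p < maxn a b)%N != (minn a b < q < maxn a b)%N) =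
  ((minn p q < a < maxn p q)%N != (minn p q < b < maxn p q)%N).
Proof.
rewrite /minn /maxn.
case: (ltngtP a b) => //; case: (ltngtP a p) => //; case: (ltngtP a q) => //;
case: (ltngtP b p) => //; case: (ltngtP b q) => //; case: (ltngtP p q) => //= *; lia.
Qed.

Lemma index_inj (T : eqType) (s : seq T) x y :
  x \in s -> y \in s -> index x s = index y s -> x = y.
Proof.
move=> hx hy e; rewrite -(nth_index x hx) -(nth_index x hy) e //.
Qed.

Lemma wf_mem K (c : 'I_(gn K)) b : gauss_wf K -> (c, b) \in gword K.
Proof.
move=> /(_ c) [h1 h2]; rewrite -has_pred1 has_count.
by case: b; [rewrite h1 | rewrite h2].
Qed.

Lemma mixed_sym K c d : gauss_wf K -> mixed_crossing K c d = mixed_crossing K d c.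
Proof.
move=> wf; rewrite /mixed_crossing eq_sym.
case: eqP => [//|/eqP ndc] /=.
have ne : forall x y, x != y -> index x (gword K) != index y (gword K).
  move=> [x bx] [y bY] nxy; apply/eqP => e; move/eqP: nxy; apply.
  by apply: index_inj e; apply: wf_mem.
rewrite /smooth_comp /pos_over /pos_under interl //; apply: ne;
  rewrite ?xpair_eqE ?negb_and ?ndc ?(eq_sym c) ?ndc ?orbT //.
Qed.

Lemma odd_abs_add (x y : int) : odd (absz (x + y)) = odd (absz x + absz y).
Proof. lia. Qed.

Lemma odd_sum_sgn K (P : pred 'I_(gn K)) :
  odd (absz (\sum_(d | P d) sgn K d)) = odd #|P|.
Proof.
rewrite -sum1_card.
apply: (big_ind2 (fun (x : int) (y : nat) => odd (absz x) = odd y)) => //.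
  by move=> x1 x2 y1 y2 h1 h2; rewrite odd_abs_add !oddD h1 h2.
by move=> i _; rewrite /sgn; case: gsign.
Qed.

Definition deg K (c : 'I_(gn K)) : nat := #|[pred d | mixed_crossing K c d]|.

Lemma Lbar_deg K c : Lbar K c = odd (deg K c).
Proof. by rewrite /Lbar /Lsmooth odd_sum_sgn. Qed.

Lemma sum_deg_even K : gauss_wf K -> ~~ odd (\sum_c deg K c).
Proof.
move=> wf.
have e : (\sum_c deg K c = \sum_c \sum_d ((mixed_crossing K c d && (c < d)%N) : nat)
          + \sum_c \sum_d ((mixed_crossing K c d && (d < c)%N) : nat))%N.
  rewrite -big_split /=; apply: eq_bigr => c _.
  rewrite /deg -sum1_card big_mkcond -big_split /=; apply: eq_bigr => d _.
  rewrite inE; have [->|ncd] := eqVneq c d.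
    by rewrite /mixed_crossing eqxx ltnn.
  have : (c < d)%N || (d < c)%N by rewrite -neq_ltn.
  case: mixed_crossing => //=; case/orP => h.
    by rewrite h ltnNge (ltnW h).
  by rewrite ltnNge (ltnW h) h.
rewrite e exchange_big /=.
have -> : (\sum_j \sum_i ((mixed_crossing K i j && (i < j)%N) : nat) =
           \sum_c \sum_d ((mixed_crossing K c d && (d < c)%N) : nat))%N.
  by apply: eq_bigr => j _; apply: eq_bigr => i _; rewrite mixed_sym.
by rewrite addnn odd_double.
Qed.

Lemma odd_sum_odd (I : finType) (f : I -> nat) :
  odd (\sum_i f i) = odd (\sum_i (odd (f i) : nat)).
Proof.
apply: (big_ind2 (fun x y : nat => odd x = odd y)) => //.
  by move=> x1 x2 y1 y2 h1 h2; rewrite !oddD h1 h2.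
by move=> i _; case: (odd (f i)).
Qed.

Theorem mainTheorem2 (K : gauss_diagram) :
  gauss_wf K ->
  exists a k : int, gamma K = a%:P + (2 * k)%:P * 'X.
Proof.
move=> wf.
set b := \sum_(c | odd (deg K c)) sgn K c.
have hb : ~~ odd (absz b).
  rewrite /b odd_sum_sgn -sum1_card big_mkcond /=.
  have := @sum_deg_even K wf; rewrite odd_sum_odd.
  by rewrite (eq_bigr (fun c => (odd (deg K c) : nat))) // => c _; case: odd.
have [k hk] : exists k : int, b = 2 * k.
  exists (b %/ 2)%Z; rewrite mulrC; apply/eqP; rewrite eq_sym -dvdz_eq.
  move: hb; rewrite /dvdz /=; lia.
exists (\sum_(c | ~~ odd (deg K c)) sgn K c), k.
rewrite -hk /gamma (bigID (fun c => odd (deg K c))) /= addrC.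
congr (_ + _).
  rewrite rmorph_sum; apply: eq_bigr => c hc.
  by rewrite Lbar_deg (negbTE hc) expr0 mulr1.
rewrite rmorph_sum big_distrl; apply: eq_bigr => c hc.
by rewrite Lbar_deg hc expr1.
Qed.
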